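(* Let $P$ be a full-dimensional integer polytope in $\mathbb{R}^d$ (all vertices in $\mathbb{Z}^d$). Then for every $0\le i\le d$, the quasi-coefficient $a_i(t)$ is periodic in $t$ with period $1$: $a_i(t+1)=a_i(t)$ for all real $t>0$.
   Context: $a_i(t) := \lim_{\epsilon\to 0^+}\sum_{\xi\in\mathbb{Z}^d}\sum_{\mathbf{T}: l(\mathbf{T})=d-i}\mathcal{R}_{\mathbf{T}}(\xi)\mathcal{E}_{\mathbf{T}}(t\xi)\mathbf{1}_{S(\mathbf{T})}(\xi)e^{-\pi\epsilon\|\xi\|^2}$ (these satisfy $A_P(t)=\sum_i a_i(t)t^i$ where $A_P(t)=\sum_{x\in\mathbb{Z}^d}\omega_{tP}(x)$). Notation: a rooted chain of length $k$ is $\mathbf{T}=(P=F_0\to\cdots\to F_k)$ with $F_j$ a facet of $F_{j-1}$, $l(\mathbf{T})=k$; $S(\mathbf{T})$ is the set of $\xi\in\mathbb{R}^d$ orthogonal to the tangent space of $F_k$ but not to that of $F_{k-1}$ ($\{0\}$ if $k=0$); $\mathrm{proj}_F$ is orthogonal projection onto the tangent space of $F$; $N_F(G)$ the outward unit normal of a facet $G$ of $F$ within the tangent space of $F$; $W_{(F,G)}(\xi)=\frac{-1}{2\pi i}\frac{\langle\mathrm{proj}_F\xi,N_F(G)\rangle}{\|\mathrm{proj}_F\xi\|^2}$; $\mathcal{R}_{\mathbf{T}}(\xi)=\mathrm{vol}(F_k)\prod_{j=1}^kW_{(F_{j-1},F_j)}(\xi)$ with $\mathrm{vol}$ the $(\dim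 F_k)$-dimensional Hausdorff measure; $\mathcal{E}_{\mathbf{T}}(\xi)=e^{-2\pi i\langle\xi,x_0\rangle}$ for $x_0\in F_k$. *)

(* Defs.v *)
(* classical reals.  Vectors of R^d are lists of reals of
   length d, lattice points of Z^d are lists of integers of length d,
   complex numbers are pairs of reals. *)
From Stdlib Require Import Reals Lra Lia ZArith List ClassicalEpsilon.
Import ListNotations.
Open Scope R_scope.

Definition Cplx := (R * R)%type.
Definition C0 : Cplx := (0, 0).
Definition C1 : Cplx := (1, 0).
Definition Cadd (z w : Cplx) : Cplx := (fst z + fst w, snd z + snd w).
Definition Csub (z w : Cplx) : Cplx := (fst z - fst w, snd z - snd w).
Definition Cmul (z w : Cplx) : Cplx :=
  (fst z * fst w - snd z * snd w, fst z * snd w + snd z * fst w).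
Definition Cscale (r : R) (z : Cplx) : Cplx := (r * fst z, r * snd z).
Definition Cnorm (z : Cplx) : R := sqrt (fst z * fst z + snd z * snd z).
Definition Csum (l : list Cplx) : Cplx := fold_right Cadd C0 l.
Definition Cprod (l : list Cplx) : Cplx := fold_right Cmul C1 l.
Definition Cexpi (theta : R) : Cplx := (cos theta, sin theta).

Definition vec := list R.
Definition vzero (d : nat) : vec := repeat 0 d.
Definition vadd (x y : vec) : vec := map (fun p => fst p + snd p) (combine x y).
Definition vsub (x y : vec) : vec := map (fun p => fst p - snd p) (combine x y).
Definition vscale (c : R) (x : vec) : vec := map (fun a => c * a) x.
Fixpoint dot (x y : vec) : R :=
  match x, y with
  | a :: x', b :: y' => a * b + dot x' y'
  | _, _ => 0
  end.
Fixpoint lincomb (d : nat) (c : list R) (vs : list vec) : vec :=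
  match c, vs with
  | a :: c', v :: vs' => vadd (vscale a v) (lincomb d c' vs')
  | _, _ => vzero d
  end.
Definition Rsum (l : list R) : R := fold_right Rplus 0 l.
Definition IZv (xi : list Z) : vec := map IZR xi.

Definition conv (d : nat) (vs : list vec) (x : vec) : Prop :=
  length x = d /\
  exists c : list R, length c = length vs /\ Forall (Rle 0) c /\
    Rsum c = 1 /\ x = lincomb d c vs.

Definition lin_indep (d : nat) (vs : list vec) : Prop :=
  forall c : list R, length c = length vs ->
    lincomb d c vs = vzero d -> Forall (fun a => a = 0) c.

Definition aff_indep (d : nat) (ps : list vec) : Prop :=
  match ps with
  | [] => True
  | p :: qs => lin_indep d (map (fun q => vsub q p) qs)
  end.

(* has_affdim d F k : the affine hull of F has dimension k (k = -1 iff F empty) *)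
Definition has_affdim (d : nat) (F : vec -> Prop) (k : Z) : Prop :=
  (k = (-1)%Z /\ forall x, ~ F x) \/
  ((0 <= k)%Z /\
   (exists ps, length ps = S (Z.to_nat k) /\ Forall F ps /\ aff_indep d ps) /\
   ~ (exists ps, length ps = S (S (Z.to_nat k)) /\ Forall F ps /\ aff_indep d ps)).

(* F is a face of the convex set K (P itself and the empty set included) *)
Definition face_of (d : nat) (K F : vec -> Prop) : Prop :=
  exists (a : vec) (b : R), length a = d /\
    (forall x, K x -> dot a x <= b) /\
    (forall x, F x <-> (K x /\ dot a x = b)).

Definition facet_of (d : nat) (F G : vec -> Prop) : Prop :=
  face_of d F G /\ exists k, has_affdim d F k /\ has_affdim d G (k - 1).

Definition lin (d : nat) (F : vec -> Prop) (v : vec) : Prop :=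
  length v = d /\
  exists (c : list R) (xs ys : list vec),
    length xs = length c /\ length ys = length c /\ Forall F xs /\ Forall F ys /\
    v = lincomb d c (map (fun p => vsub (fst p) (snd p)) (combine xs ys)).

Definition orth (d : nat) (F : vec -> Prop) (xi : vec) : Prop :=
  forall v, lin d F v -> dot xi v = 0.

Definition proj (d : nat) (F : vec -> Prop) (xi : vec) : vec :=
  epsilon (inhabits (vzero d))
    (fun w => lin d F w /\ forall v, lin d F v -> dot (vsub xi w) v = 0).

Definition outer_normal (d : nat) (F G : vec -> Prop) : vec :=
  epsilon (inhabits (vzero d))
    (fun n => lin d F n /\ dot n n = 1 /\ (forall v, lin d G v -> dot n v = 0) /\
              forall x y, F x -> G y -> dot n (vsub x y) <= 0).

(* W_{(F,G)}(xi) = -1/(2 pi i) <proj_F xi, N_F(G)> / |proj_F xi|^2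
               = i/(2 pi) * <proj_F xi, N_F(G)> / |proj_F xi|^2 *)
Definition Wfac (d : nat) (F G : vec -> Prop) (xi : vec) : Cplx :=
  let p := proj d F xi in
  (0, (dot p (outer_normal d F G) / dot p p) / (2 * PI)).

Fixpoint all_seqs {A : Type} (l : list A) (k : nat) : list (list A) :=
  match k with
  | O => [[]]
  | S k' => flat_map (fun a => map (cons a) (all_seqs l k')) l
  end.

Definition Zrange (K : nat) : list Z :=
  map (fun j => (Z.of_nat j - Z.of_nat K)%Z) (seq 0 (2 * K + 1)).

Definition affdim_nat (d : nat) (F : vec -> Prop) : nat :=
  epsilon (inhabits O) (fun m => has_affdim d F (Z.of_nat m)).

Definition onb (d : nat) (F : vec -> Prop) (m : nat) : list vec :=
  epsilon (inhabits [])
    (fun us => length us = m /\ Forall (fun u => length u = d) us /\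
       (forall j l, (j < m)%nat -> (l < m)%nat ->
          dot (nth j us []) (nth l us []) = if Nat.eqb j l then 1 else 0) /\
       (forall v, lin d F v <-> exists c, length c = m /\ v = lincomb d c us)).

Definition some_point (d : nat) (F : vec -> Prop) : vec :=
  epsilon (inhabits (vzero d)) F.

Definition grid_count (d : nat) (F : vec -> Prop) (n : nat) : nat :=
  let m := affdim_nat d F in
  let us := onb d F m in
  let x0 := some_point d F in
  length (filter (fun k =>
     if excluded_middle_informative
          (F (vadd x0 (lincomb d (map (fun z => IZR z / INR (S n)) k) us)))
     then true else false)
     (all_seqs (Zrange (n * n)) m)).

(* (dim F)-dimensional volume of the (bounded, convex) set F, as the
   Jordan content in an orthonormal coordinate system of its affine hull *)
Definition vol (d : nat) (F : vec -> Prop) : R :=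
  epsilon (inhabits 0)
    (fun v => Un_cv (fun n => INR (grid_count d F n) / INR (S n) ^ (affdim_nat d F)) v).

Fixpoint all_masks (n : nat) : list (list bool) :=
  match n with
  | O => [[]]
  | S n' => map (cons true) (all_masks n') ++ map (cons false) (all_masks n')
  end.

Fixpoint select {A : Type} (m : list bool) (l : list A) : list A :=
  match m, l with
  | b :: m', a :: l' => if b then a :: select m' l' else select m' l'
  | _, _ => []
  end.

Definition mface (d : nat) (Vr : list vec) (m : list bool) : vec -> Prop :=
  conv d (select m Vr).

(* the mask is the canonical code of its face: it selects exactly the
   generating points lying in the face *)
Definition canonical_mask (d : nat) (Vr : list vec) (m : list bool) : Prop :=
  Forall2 (fun b v => b = true <-> mface d Vr m v) m Vr.

(* ms = (F_0, ..., F_k) is a rooted chain P = F_0 -> F_1 -> ... -> F_k *)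
Definition chain_ok (d : nat) (Vr : list vec) (ms : list (list bool)) : Prop :=
  (1 <= length ms)%nat /\
  Forall (canonical_mask d Vr) ms /\
  (forall x, mface d Vr (hd [] ms) x <-> conv d Vr x) /\
  (forall j, (S j < length ms)%nat ->
     facet_of d (mface d Vr (nth j ms [])) (mface d Vr (nth (S j) ms []))).

Definition chain_term (d : nat) (Vr : list vec) (ms : list (list bool))
  (t eps : R) (xi : list Z) : Cplx :=
  let k := pred (length ms) in
  let Fs := map (mface d Vr) ms in
  let Fk := nth k Fs (fun _ => False) in
  let Fk1 := nth (pred k) Fs (fun _ => False) in
  let x := IZv xi in
  let inS := if Nat.eqb k 0 then Forall (fun z => z = 0%Z) xi
             else (orth d Fk x /\ ~ orth d Fk1 x) in
  let RT := Cscale (vol d Fk)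
              (Cprod (map (fun j => Wfac d (nth j Fs (fun _ => False))
                                          (nth (S j) Fs (fun _ => False)) x)
                          (seq 0 k))) in
  let ET := Cexpi (- (2 * PI) * dot (vscale t x) (some_point d Fk)) in
  if excluded_middle_informative inS
  then Cscale (exp (- PI * eps * dot x x)) (Cmul RT ET)
  else C0.

Definition chain_sum (d : nat) (V : list (list Z)) (k : nat) (t eps : R)
  (xi : list Z) : Cplx :=
  let Vr := map IZv V in
  Csum (map (fun ms =>
          if excluded_middle_informative (chain_ok d Vr ms)
          then chain_term d Vr ms t eps xi else C0)
        (all_seqs (all_masks (length V)) (S k))).

(* unconditional (unordered) summation over Z^d *)
Definition has_sum_Zd (d : nat) (f : list Z -> Cplx) (L : Cplx) : Prop :=
  forall eta, 0 < eta ->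
    exists F0 : list (list Z), Forall (fun xi => length xi = d) F0 /\
      forall F, NoDup F -> Forall (fun xi => length xi = d) F -> incl F0 F ->
        Cnorm (Csub (Csum (map f F)) L) < eta.

(* quasi_coeff_lim d V i t L :  a_i(t) = L, i.e.
   L = lim_{eps -> 0+} sum_{xi in Z^d} sum_{l(T) = d - i} ... *)
Definition quasi_coeff_lim (d : nat) (V : list (list Z)) (i : nat) (t : R) (L : Cplx)
  : Prop :=
  exists S : R -> Cplx,
    (forall eps, 0 < eps -> has_sum_Zd d (chain_sum d V (d - i) t eps) (S eps)) /\
    (forall eta, 0 < eta -> exists delta, 0 < delta /\
       forall eps, 0 < eps < delta -> Cnorm (Csub (S eps) L) < eta).

(* Main.v *)
Require Import Defs.
From Stdlib Require Import Reals ZArith List Lra Lia ClassicalEpsilon FunctionalExtensionality.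
Import ListNotations.
Open Scope R_scope.

Lemma dot_vadd : forall x a b, length a = length b -> dot x (vadd a b) = dot x a + dot x b.
Proof.
  induction x as [|u x IH]; intros [|p a] [|q b] H; simpl in *; try lia; try lra.
  unfold vadd in *; simpl. rewrite IH by lia. lra.
Qed.

Lemma dot_vscale_r : forall x c a, dot x (vscale c a) = c * dot x a.
Proof.
  induction x as [|u x IH]; intros c [|p a]; simpl; try lra.
  unfold vscale in *. rewrite IH. lra.
Qed.

Lemma dot_vscale_l : forall x c a, dot (vscale c x) a = c * dot x a.
Proof.
  induction x as [|u x IH]; intros c [|p a]; simpl; try lra.
  unfold vscale in *. rewrite IH. lra.
Qed.

Lemma dot_vzero : forall d x, dot x (vzero d) = 0.
Proof.
  induction d; intros [|u x]; simpl; try lra. unfold vzero in *. rewrite IHd. lra.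
Qed.

Lemma dot_vsub : forall x a b, length a = length b -> dot x (vsub a b) = dot x a - dot x b.
Proof.
  induction x as [|u x IH]; intros [|p a] [|q b] H; simpl in *; try lia; try lra.
  unfold vsub in *; simpl. rewrite IH by lia. lra.
Qed.

Lemma len_vadd : forall a b, length (vadd a b) = Nat.min (length a) (length b).
Proof. intros; unfold vadd; rewrite length_map, length_combine; auto. Qed.
Lemma len_vsub : forall a b, length (vsub a b) = Nat.min (length a) (length b).
Proof. intros; unfold vsub; rewrite length_map, length_combine; auto. Qed.
Lemma len_vscale : forall c a, length (vscale c a) = length a.
Proof. intros; unfold vscale; rewrite length_map; auto. Qed.
Lemma len_vzero : forall d, length (vzero d) = d.
Proof. intros; unfold vzero; apply repeat_length. Qed.

Lemma vadd_vzero_r : forall a, vadd a (vzero (length a)) = a.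
Proof.
  induction a; simpl; auto. unfold vadd, vzero in *; simpl. f_equal; [lra|]. apply IHa.
Qed.
Lemma vadd_vzero_l : forall a, vadd (vzero (length a)) a = a.
Proof.
  induction a; simpl; auto. unfold vadd, vzero in *; simpl. f_equal; [lra|]. apply IHa.
Qed.
Lemma vscale1 : forall a, vscale 1 a = a.
Proof. induction a; simpl; auto. unfold vscale in *; simpl. f_equal; [lra|]. apply IHa. Qed.
Lemma vscale0 : forall a, vscale 0 a = vzero (length a).
Proof. induction a; simpl; auto. unfold vscale, vzero in *; simpl. f_equal; [lra|]. apply IHa. Qed.

Lemma lincomb_zeros : forall d S, Forall (fun v => length v = d) S ->
  lincomb d (repeat 0 (length S)) S = vzero d.
Proof.
  intros d S H; induction H; simpl; auto.
  rewrite IHForall, vscale0, H. rewrite <- (len_vzero d) at 1. apply vadd_vzero_l.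
Qed.

Lemma conv_vertex : forall d S s, Forall (fun v => length v = d) S -> In s S -> conv d S s.
Proof.
  intros d S s H; induction H as [|a S Ha HS IH]; intros Hin; [destruct Hin|].
  destruct Hin as [<-|Hin].
  - split; auto. exists (1 :: repeat 0 (length S)). simpl. rewrite repeat_length.
    split; auto. split. { constructor; [lra|]. apply Forall_forall; intros z Hz.
      apply repeat_spec in Hz; lra. }
    split. { assert (Rsum (repeat 0 (length S)) = 0) as ->. { induction (length S); simpl; auto; lra. } lra. }
    rewrite lincomb_zeros by auto. rewrite vscale1, <- Ha, vadd_vzero_r. auto.
  - destruct (IH Hin) as [Hl [c [Hc1 [Hc2 [Hc3 Hc4]]]]]. split; auto.
    exists (0 :: c). simpl. split; [lia|]. split; [constructor; auto; lra|].
    split; [lra|]. rewrite vscale0, Ha, <- Hc4. rewrite <- Hl. symmetry. apply vadd_vzero_l.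
Qed.

Lemma dot_IZv : forall a b, exists n, dot (IZv a) (IZv b) = IZR n.
Proof.
  induction a as [|u a IH]; intros [|w b]; simpl; try (exists 0%Z; reflexivity).
  destruct (IH b) as [n Hn]. exists (u * w + n)%Z. unfold IZv in *. simpl. rewrite Hn.
  rewrite plus_IZR, mult_IZR. auto.
Qed.

Lemma dot_zero_xi : forall xi p, Forall (fun z => z = 0%Z) xi -> dot (IZv xi) p = 0.
Proof.
  intros xi p H; revert p; induction H; intros [|q p]; simpl; try lra.
  subst. unfold IZv in IHForall. rewrite IHForall. lra.
Qed.

Lemma select_in : forall {A} m (l : list A) v, In v (select m l) -> In v l.
Proof.
  induction m as [|b m IH]; intros [|a l] v H; try destruct H.
  destruct b; simpl in H. { destruct H; [left; auto|right; eapply IH; eauto]. } right; eapply IH; eauto.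
Qed.

Lemma conv_empty : forall d x, ~ conv d [] x.
Proof. intros d x [_ [c [Hc [_ [Hs _]]]]]. destruct c; simpl in *; try lia. lra. Qed.

Lemma len_lincomb : forall d c ws, Forall (fun w => length w = d) ws ->
  length (lincomb d c ws) = d.
Proof.
  intros d c ws H; revert c; induction H; intros [|a c]; simpl; try apply len_vzero.
  rewrite len_vadd, len_vscale, IHForall, H. lia.
Qed.

Lemma dot_lincomb0 : forall d x c ws, Forall (fun w => length w = d /\ dot x w = 0) ws ->
  dot x (lincomb d c ws) = 0.
Proof.
  intros d x c ws H; revert c; induction H as [|w ws [Hw1 Hw2] H IH]; intros [|a c]; simpl;
    try apply dot_vzero.
  rewrite dot_vadd. rewrite dot_vscale_r, IH, Hw2. lra.
  rewrite len_vscale, len_lincomb; auto. eapply Forall_impl; [|exact H]. simpl; tauto.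
Qed.

Lemma cos_periodZ : forall x z, cos (x + 2 * IZR z * PI) = cos x.
Proof.
  intros x z. destruct (Z_le_gt_dec 0 z).
  - replace z with (Z.of_nat (Z.to_nat z)) by lia. rewrite <- INR_IZR_INZ. apply cos_period.
  - replace z with (- Z.of_nat (Z.to_nat (- z)))%Z by lia. rewrite opp_IZR, <- INR_IZR_INZ.
    set (y := x + 2 * - INR (Z.to_nat (- z)) * PI).
    rewrite <- (cos_period y (Z.to_nat (- z))). f_equal. unfold y; lra.
Qed.

Lemma sin_periodZ : forall x z, sin (x + 2 * IZR z * PI) = sin x.
Proof.
  intros x z. destruct (Z_le_gt_dec 0 z).
  - replace z with (Z.of_nat (Z.to_nat z)) by lia. rewrite <- INR_IZR_INZ. apply sin_period.
  - replace z with (- Z.of_nat (Z.to_nat (- z)))%Z by lia. rewrite opp_IZR, <- INR_IZR_INZ.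
    set (y := x + 2 * - INR (Z.to_nat (- z)) * PI).
    rewrite <- (sin_period y (Z.to_nat (- z))). f_equal. unfold y; lra.
Qed.

Lemma key_nonempty : forall d (Vr : list vec) m xi,
  Forall (fun v => length v = d) Vr ->
  (forall v, In v Vr -> exists z, v = IZv z) ->
  orth d (mface d Vr m) (IZv xi) ->
  (exists y, mface d Vr m y) ->
  exists n, dot (IZv xi) (some_point d (mface d Vr m)) = IZR n.
Proof.
  intros d Vr m xi HVr HZ Horth Hne.
  assert (Hp : mface d Vr m (some_point d (mface d Vr m))).
  { unfold some_point. destruct Hne as [y Hy]. apply epsilon_spec. exists y; auto. }
  set (p := some_point d (mface d Vr m)) in *.
  unfold mface in *.
  clearbody p. destruct (select m Vr) as [|v S] eqn:Hs; [exfalso; eapply conv_empty; eauto|].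
  assert (Hvin : In v Vr) by (apply (select_in m Vr v); rewrite Hs; left; reflexivity).
  assert (Hlv : length v = d) by (rewrite Forall_forall in HVr; auto).
  assert (Hv : conv d (v :: S) v).
  { apply conv_vertex; [|left; auto]. rewrite <- Hs. apply Forall_forall. intros w Hw.
    rewrite Forall_forall in HVr. apply HVr. eapply select_in; eauto. }
  assert (Hlp : length p = d) by (destruct Hp; auto).
  assert (Hl : lin d (conv d (v :: S)) (vsub p v)).
  { split. { rewrite len_vsub; lia. }
    exists [1], [p], [v]. simpl. repeat split; auto.
    rewrite vscale1. replace d with (length (vsub p v)) by (rewrite len_vsub; lia).
    symmetry. apply vadd_vzero_r. }
  specialize (Horth _ Hl). rewrite dot_vsub in Horth by lia.
  destruct (HZ v Hvin) as [z ->]. destruct (dot_IZv xi z) as [n Hn]. exists n. lra.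
Qed.

Lemma key_empty : forall d (F1 F : vec -> Prop) x,
  facet_of d F1 F -> (forall y, ~ F y) -> (forall y, F1 y -> length y = d) ->
  orth d F1 x.
Proof.
  intros d F1 F x [_ [k [Hk1 Hk2]]] Hemp Hlen.
  assert (k = 0%Z).
  { destruct Hk2 as [[Hk _]|[_ [[ps [Hps [Hf _]]] _]]]; [lia|].
    destruct ps as [|q ps]; simpl in Hps; [lia|]. inversion Hf; subst.
    exfalso; eapply Hemp; eauto. }
  subst k. destruct Hk1 as [[Hk _]|[_ [_ Hno]]]; [lia|].
  intros v [Hlv [c [xs [ys [H1 [H2 [H3 [H4 ->]]]]]]]].
  apply dot_lincomb0. apply Forall_forall. intros w Hw.
  apply in_map_iff in Hw. destruct Hw as [[p q] [<- Hin]]. simpl.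
  pose proof (in_combine_l _ _ _ _ Hin) as Hp. pose proof (in_combine_r _ _ _ _ Hin) as Hq.
  rewrite Forall_forall in H3, H4. specialize (H3 _ Hp). specialize (H4 _ Hq).
  assert (length p = d) by auto. assert (length q = d) by auto.
  split. { rewrite len_vsub; lia. }
  destruct (Req_dec (dot x (vsub p q)) 0) as [E|E]; auto. exfalso. apply Hno.
  exists [q; p]. simpl. split; [reflexivity|]. split; [repeat constructor; auto|].
  intros c' Hc' Hz. destruct c' as [|c0 [|]]; simpl in Hc'; try lia.
  simpl in Hz. apply (f_equal (dot x)) in Hz. rewrite dot_vadd, dot_vscale_r, !dot_vzero in Hz.
  - constructor; auto. rewrite Rplus_0_r in Hz. apply Rmult_integral in Hz. lra.
  - rewrite len_vscale, len_vsub, len_vzero. lia.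
Qed.

Lemma chain_term_per : forall d (Vr : list vec) ms t eps xi,
  Forall (fun v => length v = d) Vr ->
  (forall v, In v Vr -> exists z, v = IZv z) ->
  chain_ok d Vr ms ->
  chain_term d Vr ms (t + 1) eps xi = chain_term d Vr ms t eps xi.
Proof.
  intros d Vr ms t eps xi HVr HZ Hok.
  unfold chain_term. cbv zeta.
  destruct (excluded_middle_informative _) as [HS|HS]; auto.
  set (k := Init.Nat.pred (length ms)) in *.
  set (x := IZv xi) in *.
  set (Fs := map (mface d Vr) ms) in *.
  assert (Hkey : exists n, dot x (some_point d (nth k Fs (fun _ => False))) = IZR n).
  { destruct Hok as [Hlen [_ [_ Hfac]]].
    assert (Hnth : forall j, (j < length ms)%nat ->
      nth j Fs (fun _ => False) = mface d Vr (nth j ms [])).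
    { intros j Hj. unfold Fs. rewrite (nth_indep _ _ (mface d Vr [])) by (rewrite length_map; auto).
      apply map_nth. }
    destruct (Nat.eqb_spec k 0) as [Hk0|Hk0].
    - exists 0%Z. apply dot_zero_xi. exact HS.
    - destruct HS as [Ho Hno].
      rewrite Hnth in Ho |- * by (unfold k; lia).
      rewrite Hnth in Hno by (unfold k; lia).
      destruct (classic (exists y, mface d Vr (nth k ms []) y)) as [Hne|Hne].
      + apply key_nonempty; auto.
      + exfalso. apply Hno. eapply key_empty.
        * replace (nth k ms []) with (nth (S (Init.Nat.pred k)) ms []) in Hne
            by (f_equal; lia).
          apply Hfac. unfold k; lia.
        * intros y Hy. apply Hne. exists y. replace k with (S (Init.Nat.pred k)) by lia. exact Hy.
        * intros y Hy. destruct Hy; auto. }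
  destruct Hkey as [n Hn].
  rewrite !dot_vscale_l, Hn.
  assert (E : - (2 * PI) * ((t + 1) * IZR n) = - (2 * PI) * (t * IZR n) + 2 * IZR (- n) * PI)
    by (rewrite opp_IZR; ring).
  unfold Cexpi. rewrite E, cos_periodZ, sin_periodZ. reflexivity.
Qed.

Theorem theorem7p1 (d : nat) (V : list (list Z)) :
  Forall (fun v => length v = d) V ->
  has_affdim d (conv d (map IZv V)) (Z.of_nat d) ->
  forall (i : nat), (i <= d)%nat ->
  forall (t : R), 0 < t ->
  forall L : Cplx, quasi_coeff_lim d V i (t + 1) L <-> quasi_coeff_lim d V i t L.
Proof.
  intros HV _ i _ t _ L.
  assert (HVr : Forall (fun v => length v = d) (map IZv V)).
  { apply Forall_forall. intros v Hv. apply in_map_iff in Hv. destruct Hv as [z [<- Hz]].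
    unfold IZv. rewrite length_map. rewrite Forall_forall in HV. auto. }
  assert (HZ : forall v, In v (map IZv V) -> exists z, v = IZv z).
  { intros v Hv. apply in_map_iff in Hv. destruct Hv as [z [<- _]]. eauto. }
  assert (Heq : forall eps, chain_sum d V (d - i) (t + 1) eps = chain_sum d V (d - i) t eps).
  { intros eps. apply functional_extensionality. intros xi. unfold chain_sum.
    f_equal. apply map_ext. intros ms.
    destruct (excluded_middle_informative _); auto. apply chain_term_per; auto. }
  unfold quasi_coeff_lim. split; intros [S [H1 H2]]; exists S; split; auto;
    intros eps Heps; [rewrite <- Heq | rewrite Heq]; auto.
Qed.
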